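(* Let $\mathcal{F}=\{f_1,\dots,f_{M_1}\}$ be a collection of polynomials on $\mathbb{R}^n$ satisfying property $R$. For $\varpi\in\mathbb{R}^n$ let $P^\varpi(z)=z-\varpi$. Then for any probability measure $\mu$ on $\mathbb{R}^n$, $\mu\in\mathbb{M}^{pc}_{\mathcal{F}}(\varpi)$ if and only if $(P^\varpi)_\sharp\mu\in\mathbb{M}^{pc}_{\mathcal{F}}(0)$.
   Context: $\mathcal{L}(\mathcal{F})=\{\sum_i\lambda_if_i+\lambda_0:f_i\in\mathcal{F},\lambda_i\in\mathbb{R}\}$; $\mathcal{F}$ satisfies property $R$ if $z\mapsto f(z-z_0)$ lies in $\mathcal{L}(\mathcal{F})$ for every $f\in\mathcal{F}$ and $z_0\in\mathbb{R}^n$. $\mathbb{M}^{pc}_{\mathcal{F}}(\varpi)$ is the set of probability measures $\mu$ on $\mathbb{R}^n$ with $\int z\,d\mu=\varpi$ and $\int f\,d\mu=f(\int z\,d\mu)$ for all $f\in\mathcal{F}$. $(P^\varpi)_\sharp\mu$ denotes the push-forward of $\mu$ under $P^\varpi$. *)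

(* Defs.v *)
From HB Require Import structures.
From mathcomp Require Import all_boot all_order all_algebra.
From mathcomp Require Import all_classical all_reals all_analysis measurable_realfun.
From mathcomp Require mpoly.

Set Implicit Arguments.
Unset Strict Implicit.
Unset Printing Implicit Defensive.
Import Order.TTheory GRing.Theory Num.Theory.
Local Open Scope classical_set_scope.
Local Open Scope ring_scope.

(* R^n is modelled as n.-tuple R, with its canonical product (Borel)
   sigma-algebra from mathcomp-analysis. *)

Definition tsub (R : realType) (n : nat) (z w : n.-tuple R) : n.-tuple R :=
  [tuple tnth z i - tnth w i | i < n].

Definition tzero (R : realType) (n : nat) : n.-tuple R := [tuple (0:R) | _ < n].

Definition peval (R : realType) (n : nat) (p : mpoly.mpoly n R) (z : n.-tuple R) : R :=
  mpoly.meval (fun i => tnth z i) p.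

Definition in_affine_span (R : realType) (n M : nat) (F : 'I_M -> mpoly.mpoly n R)
    (g : n.-tuple R -> R) : Prop :=
  exists (lam : 'I_M -> R) (lam0 : R),
    forall z, g z = \sum_(i < M) lam i * peval (F i) z + lam0.

Definition propR (R : realType) (n M : nat) (F : 'I_M -> mpoly.mpoly n R) : Prop :=
  forall (k : 'I_M) (z0 : n.-tuple R),
    in_affine_span F (fun z => peval (F k) (tsub z z0)).

Definition Pw (R : realType) (n : nat) (w : n.-tuple R) : n.-tuple R -> n.-tuple R :=
  fun z => tsub z w.

Lemma measurable_Pw (R : realType) (n : nat) (w : n.-tuple R) :
  measurable_fun [set: n.-tuple R] (Pw w).
Proof.
apply/measurable_fun_tnthP => i /=.
have -> : (@tnth n R)^~ i \o Pw w = (fun z => tnth z i - tnth w i).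
  by apply/funext => z /=; rewrite /Pw /tsub tnth_map tnth_ord_tuple.
apply: measurable_funB; first exact: measurable_tnth.
exact: measurable_cst.
Qed.

Definition push_Pw (R : realType) (n : nat) (w : n.-tuple R)
    (mu : set (n.-tuple R) -> \bar R) : set (n.-tuple R) -> \bar R :=
  pushforward mu (Pw w).

Section push_Pw_measure.
Local Open Scope ereal_scope.
Context (R : realType) (n : nat) (w : n.-tuple R)
        (mu : {measure set (n.-tuple R) -> \bar R}).

Let mf := measurable_Pw w.

Let push0 : push_Pw w mu set0 = 0.
Proof. by rewrite /push_Pw /pushforward preimage_set0 measure0. Qed.

Let push_ge0 A : 0 <= push_Pw w mu A.
Proof. by rewrite /push_Pw /pushforward; apply: measure_ge0; rewrite -[X in measurable X]setIT; apply: mf. Qed.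

Let push_sigma_additive : semi_sigma_additive (push_Pw w mu).
Proof.
move=> F mF tF mUF; rewrite /push_Pw /pushforward preimage_bigcup.
apply: measure_semi_sigma_additive.
- by move=> k; rewrite -[X in measurable X]setTI; exact: mf.
- apply/trivIsetP => /= i j _ _ ij; rewrite -preimage_setI.
  by move/trivIsetP : tF => /(_ _ _ _ _ ij) ->//; rewrite preimage_set0.
- by rewrite -preimage_bigcup -[X in measurable X]setTI; exact: mf.
Qed.

HB.instance Definition _ := isMeasure.Build _ _ _
  (push_Pw w mu) push0 push_ge0 push_sigma_additive.

End push_Pw_measure.

(* mu \in M^pc_F(varpi): mu is a probability measure, its coordinates are
   integrable with  \int z dmu = varpi, and every f in F is integrable with
   \int f dmu = f(\int z dmu) = f(varpi). *)
Definition Mpc (R : realType) (n M : nat) (F : 'I_M -> mpoly.mpoly n R)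
    (w : n.-tuple R) (mu : {measure set (n.-tuple R) -> \bar R}) : Prop :=
  mu setT = 1%E /\
  (forall i : 'I_n, mu.-integrable setT (fun z => (tnth z i)%:E) /\
     (\int[mu]_z (tnth z i)%:E = (tnth w i)%:E)%E) /\
  (forall k : 'I_M, mu.-integrable setT (fun z => (peval (F k) z)%:E) /\
     (\int[mu]_z (peval (F k) z)%:E = (peval (F k) w)%:E)%E).

(* Main.v *)
Require Import Defs.
From HB Require Import structures.
From mathcomp Require Import all_boot all_order all_algebra.
From mathcomp Require Import all_classical all_reals all_analysis.
From mathcomp Require Import measurable_realfun.
From mathcomp Require mpoly.

Set Implicit Arguments.
Unset Strict Implicit.
Unset Printing Implicit Defensive.
Import Order.TTheory GRing.Theory Num.Theory.
Local Open Scope classical_set_scope.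
Local Open Scope ring_scope.

Lemma tnth_tsub (R : realType) n (z w : n.-tuple R) i :
  tnth (tsub z w) i = tnth z i - tnth w i.
Proof. by rewrite /tsub tnth_map tnth_ord_tuple. Qed.

Lemma tnth_tzero (R : realType) n i : tnth (tzero R n) i = 0.
Proof. by rewrite /tzero tnth_map. Qed.

Lemma tsubK (R : realType) n (z w : n.-tuple R) :
  tsub (tsub z w) (tsub (tzero R n) w) = z.
Proof.
by apply: eq_from_tnth => i; rewrite !tnth_tsub tnth_tzero sub0r opprK subrK.
Qed.

Lemma tsubv (R : realType) n (w : n.-tuple R) : tsub w w = tzero R n.
Proof. by apply: eq_from_tnth => i; rewrite tnth_tsub tnth_tzero subrr. Qed.

Lemma tsub0v (R : realType) n (w : n.-tuple R) :
  tsub (tzero R n) (tsub (tzero R n) w) = w.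
Proof.
by apply: eq_from_tnth => i; rewrite !tnth_tsub tnth_tzero !sub0r opprK.
Qed.

Section affine.
Local Open Scope ereal_scope.
Context d (T : measurableType d) (R : realType) (mu : probability T R).

Lemma affine_int M (g : 'I_M -> T -> R) (c : 'I_M -> R) (lam : 'I_M -> R)
  (lam0 : R) (f : T -> R) :
  (forall i, mu.-integrable setT (fun z => (g i z)%:E) /\
             \int[mu]_z (g i z)%:E = (c i)%:E) ->
  (forall z, f z = (\sum_(i < M) lam i * g i z + lam0)%R) ->
  mu.-integrable setT (fun z => (f z)%:E) /\
  \int[mu]_z (f z)%:E = (\sum_(i < M) lam i * c i + lam0)%R%:E.
Proof.
move=> hg hf.
have -> : (fun z => (f z)%:E) =
  (fun z => \sum_(i < M) (lam i)%:E * (g i z)%:E) \+ (EFin \o cst lam0).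
  by apply/funext => z; rewrite hf /= EFinD -sumEFin.
have i1 : mu.-integrable setT (fun z => \sum_(i < M) (lam i)%:E * (g i z)%:E).
  apply: integrable_sum => // i _; apply: integrableZl => //; exact: (proj1 (hg i)).
have i2 : mu.-integrable setT (EFin \o cst lam0).
  exact: finite_measure_integrable_cst.
split; first exact: integrableD.
have h1 : forall X : \bar R, X = 1 -> lam0%:E * X = lam0%:E by move=> X ->; rewrite mule1.
rewrite integralD //= integral_cst // h1; last exact: probability_setT.
rewrite integral_sum //; last by move=> i; apply: integrableZl => //; exact: (proj1 (hg i)).
rewrite EFinD -sumEFin; congr (_ + _); apply: eq_bigr => i _.
by rewrite integralZl // ?(proj2 (hg i)) //; exact: (proj1 (hg i)).
Qed.

End affine.

Section transfer.
Local Open Scope ereal_scope.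
Context (R : realType) (n : nat) (w : n.-tuple R) (mu : probability (n.-tuple R) R).

Lemma transfer (h : n.-tuple R -> R) :
  measurable_fun setT (fun z => (h z)%:E) ->
  ((push_Pw w mu).-integrable setT (fun z => (h z)%:E) <->
   mu.-integrable setT (fun z => (h (Pw w z))%:E)) /\
  (mu.-integrable setT (fun z => (h (Pw w z))%:E) ->
   \int[push_Pw w mu]_z (h z)%:E = \int[mu]_z (h (Pw w z))%:E).
Proof.
move=> mh.
have mPw := measurable_Pw w.
have mc : measurable_fun setT (fun z => (h (Pw w z))%:E).
  exact: (measurableT_comp mh mPw).
split; first split.
  move=> /integrableP [_ hi]; apply/integrableP; split => //.
  move: hi; rewrite /push_Pw ge0_integral_pushforward //.
  exact: measurableT_comp.
  move=> hi; rewrite /push_Pw; apply: integrable_pushforward => //.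
move=> hi; rewrite /push_Pw integral_pushforward //.
all: try match goal with |- ?G => idtac "GOAL3" G end.
Qed.

End transfer.

Local Close Scope ring_scope.
Local Close Scope classical_set_scope.
Unset Implicit Arguments.

Theorem lemma18 (R : realType) (n M1 : nat)
    (F : 'I_M1 -> mpoly.mpoly n R) (hR : propR F) (w : n.-tuple R)
    (mu : probability (n.-tuple R) R) :
  Mpc F w mu <-> Mpc F (tzero R n) (push_Pw w mu).
Proof.
split.
  case=> [h1 [hc hf]]; split; [|split].
    change (mu (Pw w @^-1` setT) = 1%E)%classic; rewrite preimage_setT; exact: h1.
  move=> i.
  have [[_ ht] he] := transfer w mu (measurable_int _ (proj1 (hc i))).
  have [hi hint] := @affine_int _ _ _ mu 1 (fun _ z => tnth z i) (fun _ => tnth w i)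
    (fun _ => 1%R) (- tnth w i)%R (fun z => tnth (Pw w z) i) (fun _ => hc i)
    (fun z => ltac:(by rewrite big_ord1 mul1r /Pw tnth_tsub)).
  split; first exact: ht.
  by rewrite he // hint big_ord1 mul1r subrr tnth_tzero.
  move=> k.
  have [lam [lam0 hl]] := hR k w.
  have [ht he] := transfer w mu (measurable_int _ (proj1 (hf k))).
  have [hi hint] := @affine_int _ _ _ mu M1 (fun i z => peval (F i) z)
    (fun i => peval (F i) w) lam lam0 (fun z => peval (F k) (Pw w z)) hf hl.
  split; first exact: (proj2 ht).
  by rewrite he // hint -hl tsubv.
case=> [h1 [hc hf]]; split; [|split].
  exact: probability_setT.
move=> i.
have [[ht _] he] := transfer w mu (measurable_int _ (proj1 (hc i))).
have hg : mu.-integrable setT (fun z => (tnth (Pw w z) i)%:E) /\ (\int[mu]_z (tnth (Pw w z) i)%:E = (0%R)%:E)%E.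
  split; first exact: ht (proj1 (hc i)).
  by rewrite -he; [rewrite (proj2 (hc i)) tnth_tzero | exact: ht (proj1 (hc i))].
have [hi hint] := @affine_int _ _ _ mu 1 (fun _ z => tnth (Pw w z) i) (fun _ => 0%R)
    (fun _ => 1%R) (tnth w i) (fun z => tnth z i) (fun _ => hg)
    (fun z => ltac:(by rewrite big_ord1 mul1r /Pw tnth_tsub subrK)).
split; first exact: hi.
by rewrite hint big_ord1 mul1r add0r.
move=> k.
have [lam [lam0 hl]] := hR k (tsub (tzero R n) w).
have hg : forall i, mu.-integrable setT (fun z => (peval (F i) (Pw w z))%:E) /\ (\int[mu]_z (peval (F i) (Pw w z))%:E = (peval (F i) (tzero R n))%:E)%E.
  move=> i.
  have [[ht _] he] := transfer w mu (measurable_int _ (proj1 (hf i))).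
  split; first exact: ht (proj1 (hf i)).
  by rewrite -he; [rewrite (proj2 (hf i)) | exact: ht (proj1 (hf i))].
have [hi hint] := @affine_int _ _ _ mu M1 (fun i z => peval (F i) (Pw w z))
    (fun i => peval (F i) (tzero R n)) lam lam0 (fun z => peval (F k) z) hg
    (fun z => ltac:(by rewrite -hl /Pw tsubK)).
split; first exact: hi.
by rewrite hint -hl tsub0v.
Qed.
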